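(* Let $f,f'\colon\mathbb F_2^n\to\mathbb F_2$ be two Boolean functions (not necessarily bent). If the translation designs $\operatorname{dev}(D_f)$ and $\operatorname{dev}(D_{f'})$ are isomorphic, then the translation designs $\operatorname{dev}(G_f)$ and $\operatorname{dev}(G_{f'})$ are isomorphic.
   Context: For a subset $A$ of an additive group $G$, the development $\operatorname{dev}(A)$ is the incidence structure whose points are the elements of $G$ and whose blocks are the translates $A+g=\{a+g:a\in A\}$, $g\in G$ (one block per $g$; its incidence matrix has rows indexed by $g$). For $f\colon\mathbb F_2^n\to\mathbb F_2$, $D_f=\{\mathbf x: f(\mathbf x)=1\}\subseteq\mathbb F_2^n$ is its support and $G_f=\{(\mathbf x,f(\mathbf x)):\mathbf x\in\mathbb F_2^n\}\subseteq\mathbb F_2^n\times\mathbb F_2$ its graph. Two incidence structures with incidence matrices $M,M'$ are isomorphic if $M=PM'Q$ for some permutation matrices $P,Q$. *)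

(* Defs.v *)
From HB Require Import structures.
From mathcomp Require Import all_boot all_order all_algebra all_fingroup.
Set Implicit Arguments. Unset Strict Implicit. Unset Printing Implicit Defensive.
Import GRing.Theory.
Local Open Scope ring_scope.

(* Incidence matrix of dev(A) for A a subset of a finite additive group G:
   rows indexed by g : G (the block A + g), columns by points x : G;
   entry is true iff x \in A + g, i.e. x - g \in A. *)
Definition dev_inc (G : finZmodType) (A : {set G}) (g x : G) : bool :=
  x - g \in A.

(* Isomorphism of incidence structures given by (boolean) incidence matrices
   with rows indexed by R, R' and columns by C, C':
   M = P M' Q for permutation matrices P, Q, i.e. there are bijections
   sigma : R -> R', tau : C -> C' with M r c = M' (sigma r) (tau c). *)
Definition inc_iso (R C R' C' : finType) (M : R -> C -> bool) (M' : R' -> C' -> bool) : Prop :=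
  exists (sigma : R -> R') (tau : C -> C'),
    [/\ bijective sigma, bijective tau &
        forall r c, M r c = M' (sigma r) (tau c)].

Notation vec n := ('rV['F_2]_n).

Definition vec1 n := (vec n * 'F_2)%type.
HB.instance Definition _ n := GRing.Zmodule.on (vec1 n).
HB.instance Definition _ n := Finite.on (vec1 n).

Definition supp n (f : vec n -> 'F_2) : {set vec n} := [set x | f x == 1].
Definition graphf n (f : vec n -> 'F_2) : {set vec1 n} :=
  [set p | p.2 == f p.1].

(* Main.v *)
Require Import Defs.
From HB Require Import structures.
From mathcomp Require Import all_boot all_order all_algebra all_fingroup.

Import GRing.Theory.
Local Open Scope ring_scope.

Lemma F2_eq1 (a b : 'F_2) : (a == 1) = (b == 1) -> a = b.
Proof.
case: a => -[|[|//]] Ha; case: b => -[|[|//]] Hb /= E; apply/val_inj => //=.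
Qed.

Theorem proposition1 (n : nat) (f f' : 'rV['F_2]_n -> 'F_2) :
  inc_iso (dev_inc (supp f)) (dev_inc (supp f')) ->
  inc_iso (dev_inc (graphf f)) (dev_inc (graphf f')).
Proof.
case=> sigma [tau [[si siK Ksi] [ti tiK Kti] H]].
have Hf : forall g x, f (x - g) = f' (tau x - sigma g).
  move=> g x; apply: F2_eq1; have := H g x.
  by rewrite /dev_inc /supp !inE.
exists (fun p : vec1 n => (sigma p.1, p.2)), (fun p : vec1 n => (tau p.1, p.2)).
split.
- exists (fun p : vec1 n => (si p.1, p.2)) => -[a b] /=; by rewrite ?siK ?Ksi.
- exists (fun p : vec1 n => (ti p.1, p.2)) => -[a b] /=; by rewrite ?tiK ?Kti.
- move=> [g b] [x a]; rewrite /dev_inc /graphf !inE /=.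
  by rewrite Hf.
Qed.
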